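(* Let $\tilde{A}\in\mathbb{Q}^{q\times n}$, $\tilde{b}\in\mathbb{Q}^q$ be the constraint data of the LP relaxation $P=\{x:\tilde{A}x\ge\tilde{b}\}=\{x:Ax\ge b,\ x\ge 0,\ x_j\le 1,\ j=1,\dots,p\}$ ($q=m+n+p$, $Q=\{1,\dots,q\}$), let $\bar{x}\in P$, and let $T$ be a finite index set with $D^t\in\mathbb{Q}^{r\times n}$, $d_0^t\in\mathbb{Q}^r$ for $t\in T$. Let $\bar{w}=(\bar{\alpha},\bar{\beta},\{\bar{u}^t,\bar{v}^t\}_{t\in T})$ be a basic optimal solution of the CGLP (minimize $\alpha\bar{x}-\beta$ over the CGLP system) such that the cut separates $\bar{x}$, i.e. $\bar{\alpha}\bar{x}<\bar{\beta}$. Let $(\check{\theta},\check{\delta},\{\check{u}^t,\check{v}^t\}_{t\in T})$ be an optimal solution of the RCV-MILP for the cut $\bar{\alpha}x\ge\bar{\beta}$. Then the cut $\bar{\alpha}x\ge\bar{\beta}$ is not strictly irregular if and only if $\check{\theta}>0$.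
   Context: The CGLP system consists of variables $\alpha\in\mathbb{R}^n$, $\beta\in\mathbb{R}$, $u^t\in\mathbb{R}^q$, $v^t\in\mathbb{R}^r$ ($t\in T$) and constraints: $\alpha-u^t\tilde{A}-v^tD^t=0$ and $\beta-u^t\tilde{b}-v^td_0^t=0$ for all $t\in T$; $\sum_{t\in T}\sum_{i=1}^q u^t_i+\sum_{t\in T}\sum_{i=1}^r v^t_i=1$; $u^t,v^t\ge 0$ for all $t\in T$. For a feasible solution with multipliers $u$, let $N(u)=\{j\in Q: u^t_j>0\text{ for some } t\in T\}$ and let $\tilde{A}_N$ denote the submatrix of $\tilde{A}$ with rows indexed by $N$. A feasible solution of the CGLP system (basic or not) is called extended regular if $\tilde{A}_{N(u)}$ has full row rank. A cut $\alpha x\ge\beta$ is strictly irregular if there is no extended regular feasible CGLP solution whose $(\alpha,\beta)$-component equals $(\alpha,\beta)$ up to a positive scalar multiple. The RCV-MILP for the cut $\bar{\alpha}x\ge\bar{\beta}$ has variables $\theta\in[0,1]$, $\delta_j\in\{0,1\}$ ($j\in Q$), $u^t\in\mathbb{R}^q$, $v^t\in\mathbb{R}^r$ ($t\in T$), and is: maximize $\theta$ subject to $\theta\bar{\alpha}-u^t\tilde{A}-v^tD^t=0$ and $\theta\bar{\beta}-u^t\tilde{b}-v^td_0^t=0$ for all $t\in T$; $\delta_j-u^t_j\ge 0$ for all $j\in Q$, $t\in T$; $\sum_{j\in Q}\delta_j\le n$; $\sum_{j\in N}\delta_j\le\operatorname{rank}(\tilde{A}_N)$ for every subset $N\subseteq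 Q$; $u^t,v^t\ge 0$ for all $t\in T$. *)

(* Defs.v *)
From HB Require Import structures.
From mathcomp Require Import all_boot all_order all_algebra.
From mathcomp Require Import reals.
Set Implicit Arguments. Unset Strict Implicit. Unset Printing Implicit Defensive.
Import Order.TTheory GRing.Theory Num.Theory.
Local Open Scope ring_scope.

(* ---- The LP relaxation data  P = {x : Ax >= b, x >= 0, x_j <= 1 (j < p)}
        written as  Atil x >= btil  with q = m + n + p rows:
        rows of A, then the n rows of the identity (x >= 0), then the
        p rows -e_j (-x_j >= -1).                                        *)
Definition Atil (m n p : nat) (A : 'M[rat]_(m, n)) : 'M[rat]_(m + (n + p), n) :=
  col_mx A (col_mx 1%:M (- \matrix_(i < p, j < n) (if (i : nat) == j then 1 else 0))).

Definition btil (m n p : nat) (b : 'cV[rat]_m) : 'cV[rat]_(m + (n + p)) :=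
  col_mx b (col_mx (0 : 'cV[rat]_n) (- const_mx 1)).

Section CGLP.
Variable R : realFieldType.
Variables (q n r : nat) (T : finType).
Variables (At : 'M[R]_(q, n)) (bt : 'cV[R]_q).
Variables (D : T -> 'M[R]_(r, n)) (d0 : T -> 'cV[R]_r).

Definition subrows (N : {set 'I_q}) : 'M[R]_(#|N|, n) :=
  rowsub (fun i : 'I_#|N| => enum_val i) At.

Definition cglp_feasible (alpha : 'rV[R]_n) (beta : R)
    (u : T -> 'rV[R]_q) (v : T -> 'rV[R]_r) : Prop :=
  [/\ (forall t, alpha - u t *m At - v t *m D t = 0),
      (forall t, beta%:M - u t *m bt - v t *m d0 t = 0),
      \sum_(t : T) \sum_(i < q) u t 0 i + \sum_(t : T) \sum_(i < r) v t 0 i = 1,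
      (forall t i, 0 <= u t 0 i) &
      (forall t i, 0 <= v t 0 i)].

Definition cglp_obj (xbar : 'cV[R]_n) (alpha : 'rV[R]_n) (beta : R) : R :=
  (alpha *m xbar) 0 0 - beta.

(* Basic solution = extreme point (vertex) of the CGLP feasible region. *)
Definition cglp_basic alpha beta u v : Prop :=
  cglp_feasible alpha beta u v /\
  forall (lam : R) alpha1 beta1 u1 v1 alpha2 beta2 u2 v2,
    0 < lam < 1 ->
    cglp_feasible alpha1 beta1 u1 v1 -> cglp_feasible alpha2 beta2 u2 v2 ->
    alpha = lam *: alpha1 + (1 - lam) *: alpha2 ->
    beta = lam * beta1 + (1 - lam) * beta2 ->
    (forall t, u t = lam *: u1 t + (1 - lam) *: u2 t) ->
    (forall t, v t = lam *: v1 t + (1 - lam) *: v2 t) ->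
    [/\ alpha1 = alpha2, beta1 = beta2, u1 = u2 & v1 = v2].

Definition cglp_basic_optimal xbar alpha beta u v : Prop :=
  cglp_basic alpha beta u v /\
  forall alpha' beta' u' v', cglp_feasible alpha' beta' u' v' ->
    cglp_obj xbar alpha beta <= cglp_obj xbar alpha' beta'.

Definition Nset (u : T -> 'rV[R]_q) : {set 'I_q} :=
  [set j | [exists t, 0 < u t 0 j]].

Definition extended_regular alpha beta u v : Prop :=
  cglp_feasible alpha beta u v /\ row_free (subrows (Nset u)).

Definition strictly_irregular (abar : 'rV[R]_n) (bbar : R) : Prop :=
  ~ exists (alpha : 'rV[R]_n) (beta : R) (u : T -> 'rV[R]_q)
      (v : T -> 'rV[R]_r) (lam : R),
      [/\ extended_regular alpha beta u v, 0 < lam,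
          alpha = lam *: abar & beta = lam * bbar].

Definition rcv_feasible (abar : 'rV[R]_n) (bbar : R) (theta : R)
    (delta : 'I_q -> R) (u : T -> 'rV[R]_q) (v : T -> 'rV[R]_r) : Prop :=
  [/\ 0 <= theta <= 1,
      (forall j, delta j = 0 \/ delta j = 1),
      (forall t, theta *: abar - u t *m At - v t *m D t = 0),
      (forall t, (theta * bbar)%:M - u t *m bt - v t *m d0 t = 0) &
      (forall j t, 0 <= delta j - u t 0 j)] /\
  [/\ 
\sum_(j < q) delta j <= n%:R,
      (forall N : {set 'I_q}, \sum_(j in N) delta j <= (\rank (subrows N))%:R),
      (forall t i, 0 <= u t 0 i) &
      (forall t i, 0 <= v t 0 i)].

Definition rcv_optimal abar bbar theta delta u v : Prop :=
  rcv_feasible abar bbar theta delta u v /\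
  forall theta' delta' u' v', rcv_feasible abar bbar theta' delta' u' v' ->
    theta' <= theta.

End CGLP.

(* Main.v *)
Require Import Defs.
From HB Require Import structures.
From mathcomp Require Import all_boot all_order all_algebra.
From mathcomp Require Import reals.
From Stdlib Require Classical_Prop.
Import Order.TTheory GRing.Theory Num.Theory.
Local Open Scope ring_scope.
Set Implicit Arguments. Unset Strict Implicit. Unset Printing Implicit Defensive.

Lemma rowsub_free (F : fieldType) k m n (g : 'I_k -> 'I_m) (B : 'M[F]_(m,n)) :
  injective g -> row_free B -> row_free (rowsub g B).
Proof.
move=> gI /row_freeP [C hC]; apply/row_freeP; exists (C *m colsub g 1%:M).
rewrite mulmxA mul_rowsub_mx hC mul_rowsub_mx mul1mx.
apply/matrixP => i j; rewrite !mxE (inj_eq gI) //.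
Qed.

Section S.
Variable R : realFieldType.
Variables (q n : nat).
Variable At : 'M[R]_(q, n).

Lemma card_subrows (N N' : {set 'I_q}) :
  row_free (subrows At N) -> (#|N' :&: N| <= \rank (subrows At N'))%N.
Proof.
move=> hN.
have [->//|] := posnP #|N' :&: N|.
move=> /card_gt0P [x0 /setIP [x0N' x0N]].
pose gK := fun i : 'I_#|N' :&: N| => enum_val i.
have gKin i : gK i \in N' :&: N by apply: enum_valP.
pose g := fun i => enum_rank_in x0N (gK i).
pose h := fun i => enum_rank_in x0N' (gK i).
have E : rowsub g (subrows At N) = rowsub h (subrows At N').
  apply/matrixP => i j; rewrite !mxE /g /h.
  have /setIP [i1 i2] := gKin i.
  by rewrite !enum_rankK_in.
have gI : injective g.
  move=> i j /(congr1 enum_val); rewrite /g.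
  have /setIP [i1 i2] := gKin i; have /setIP [j1 j2] := gKin j.
  by rewrite !enum_rankK_in // => /enum_val_inj.
have := rowsub_free gI hN; rewrite /row_free E => /eqP <-.
apply: mxrankS; exact: rowsub_sub.
Qed.

Lemma le_sum_term (I : finType) (F : I -> R) i :
  (forall j, 0 <= F j) -> F i <= \sum_j F j.
Proof. by move=> h; rewrite (bigD1 i) //= lerDl sumr_ge0. Qed.

Variables (r : nat) (T : finType) (bt : 'cV[R]_q).
Variables (D : T -> 'M[R]_(r, n)) (d0 : T -> 'cV[R]_r).

Lemma dirA abar bbar thc dc uc vc (t0 : T) :
  rcv_feasible At bt D d0 abar bbar thc dc uc vc -> 0 < thc ->
  (abar != 0) || (bbar != 0) ->
  ~ strictly_irregular At bt D d0 abar bbar.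
Proof.
move=> [[hth hd hA hb hdu] [hsn hsN hu hv]] thpos hne SI; apply: SI.
set s := \sum_t \sum_i uc t 0 i + \sum_t \sum_i vc t 0 i.
have s1 : 0 <= \sum_t \sum_i uc t 0 i by rewrite sumr_ge0 // => t _; rewrite sumr_ge0.
have s2 : 0 <= \sum_t \sum_i vc t 0 i by rewrite sumr_ge0 // => t _; rewrite sumr_ge0.
have s0 : 0 <= s by rewrite addr_ge0.
have sne : s != 0.
  apply/negP; rewrite /s paddr_eq0 // => /andP [/eqP e1 /eqP e2].
  have u0 : uc t0 = 0.
    apply/matrixP => i j; rewrite ord1 mxE.
    have := psumr_eq0P (fun t _ => sumr_ge0 _ (fun i _ => hu t i)) e1 (i:=t0) isT.
    by move/(fun E => psumr_eq0P (fun i _ => hu t0 i) E (i:=j) isT) => ->.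
  have v0 : vc t0 = 0.
    apply/matrixP => i j; rewrite ord1 mxE.
    have := psumr_eq0P (fun t _ => sumr_ge0 _ (fun i _ => hv t i)) e2 (i:=t0) isT.
    by move/(fun E => psumr_eq0P (fun i _ => hv t0 i) E (i:=j) isT) => ->.
  have := hA t0; rewrite u0 v0 !mul0mx !subr0 => /eqP; rewrite scaler_eq0.
  have := hb t0; rewrite u0 v0 !mul0mx !subr0 => /eqP.
  rewrite -scalemx1 scaler_eq0 oner_eq0 orbF mulf_eq0.
  rewrite (gt_eqF thpos) /= => /eqP hb0 /eqP ha0.
  by rewrite ha0 hb0 !eqxx in hne.
have spos : 0 < s by rewrite lt_def sne s0.
exists ((thc / s) *: abar), (thc / s * bbar), (fun t => s^-1 *: uc t),
  (fun t => s^-1 *: vc t), (thc / s).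
split => //; last by rewrite divr_gt0.
split.
  split.
  - move=> t; rewrite mulrC -scalerA -!scalemxAl -!scalerBr hA scaler0 //.
  - move=> t; rewrite mulrAC mulrC -scale_scalar_mx -!scalemxAl -!scalerBr hb scaler0 //.
  - transitivity (s^-1 * s); last exact: mulVf.
    rewrite /s mulrDr !mulr_sumr; congr (_ + _); apply: eq_bigr => t _;
    rewrite mulr_sumr; apply: eq_bigr => i _; rewrite mxE //.
  - by move=> t i; rewrite mxE mulr_ge0 // invr_ge0.
  - by move=> t i; rewrite mxE mulr_ge0 // invr_ge0.
have -> : Nset (fun t => s^-1 *: uc t) = Nset uc.
  apply/setP => j; rewrite !inE; apply: eq_existsb => t.
  by rewrite mxE pmulr_rgt0 // invr_gt0.
set N := Nset uc.
have hdN : forall j, j \in N -> dc j = 1.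
  move=> j; rewrite inE => /existsP [t ht]; case: (hd j) => // hj0.
  have := hdu j t; rewrite hj0 sub0r oppr_ge0 => h.
  by have := lt_le_trans ht h; rewrite ltxx.
have := hsN N; rewrite (eq_bigr (fun _ => 1)) // sumr_const ler_nat => hle.
by rewrite /row_free eqn_leq rank_leq_row.
Qed.

Lemma dirB abar bbar thc dc uc vc :
  rcv_optimal At bt D d0 abar bbar thc dc uc vc ->
  ~ strictly_irregular At bt D d0 abar bbar -> 0 < thc.
Proof.
move=> [_ hopt] /Classical_Prop.NNPP [alpha [beta [u [v [lam [[hf hrf] hl ha hb]]]]]].
case: hf => h1 h2 h3 h4 h5.
set N := Nset u.
set c := (1 + lam)^-1.
have cpos : 0 < c by rewrite invr_gt0 addr_gt0.
have cle1 : c <= 1 by rewrite invf_le1 ?addr_gt0 // lerDl ltW.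
have ule1 : forall t j, u t 0 j <= 1.
  move=> t j.
  have e : \sum_t \sum_i u t 0 i <= 1.
    by rewrite -h3 lerDl sumr_ge0 // => t' _; rewrite sumr_ge0.
  apply: (le_trans _ e).
  have := le_sum_term (F:=fun t => \sum_i u t 0 i) t (fun t' => sumr_ge0 _ (fun i _ => h4 t' i)).
  apply: le_trans; exact: le_sum_term.
apply: (lt_le_trans _ (hopt (c * lam) (fun j => (j \in N)%:R)
   (fun t => c *: u t) (fun t => c *: v t) _)); first by rewrite mulr_gt0.
split; split.
  rewrite mulr_ge0 ?(ltW cpos) ?(ltW hl) //= /c mulrC ler_pdivrMr ?addr_gt0 // mul1r lerDr ler01 //.
- by move=> j; case: (j \in N); [right|left].
- by move=> t; rewrite -scalerA -ha -!scalemxAl -!scalerBr h1 scaler0.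
- by move=> t; rewrite -mulrA -scale_scalar_mx -hb -!scalemxAl -!scalerBr h2 scaler0.
- move=> j t; rewrite mxE; case: (boolP (j \in N)) => hj.
    by rewrite subr_ge0; apply: mulr_ile1; rewrite ?(ltW cpos) ?h4 ?cle1 ?ule1.
  have u0 : u t 0 j = 0.
    apply/eqP; rewrite eq_le h4 andbT leNgt; apply/negP => hp.
    by move: hj; rewrite inE; apply/negP/negPn/existsP; exists t.
  by rewrite u0 mulr0 subr0.
- rewrite (eq_bigr (fun j => if j \in N then 1 else 0)) => [|j _]; last by case: (j \in N).
  rewrite -big_mkcond sumr_const ler_nat -(eqP hrf); exact: rank_leq_col.
- move=> N'; rewrite (eq_bigr (fun j => if j \in N then 1 else 0)) => [|j _]; last by case: (j \in N).
  rewrite -big_mkcondr (eq_bigl (fun j => j \in N' :&: N)) => [|j]; last by rewrite in_setI.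
  rewrite sumr_const ler_nat; exact: card_subrows.
- by move=> t i; rewrite mxE mulr_ge0 // ltW.
- by move=> t i; rewrite mxE mulr_ge0 // ltW.
Qed.
End S.
Unset Implicit Arguments.

Theorem theorem4 (R : realType) (m n p r : nat) (T : finType)
    (A : 'M[rat]_(m, n)) (b : 'cV[rat]_m) (hp : (p <= n)%N)
    (D : T -> 'M[rat]_(r, n)) (d0 : T -> 'cV[rat]_r)
    (xbar : 'cV[R]_n)
    (hxbar : forall i, (map_mx ratr (btil n p b) : 'cV[R]_(m + (n + p))) i 0
                       <= (map_mx ratr (Atil p A) *m xbar) i 0)
    (abar : 'rV[R]_n) (bbar : R)
    (ubar : T -> 'rV[R]_(m + (n + p))) (vbar : T -> 'rV[R]_r)
    (hopt : cglp_basic_optimal (map_mx ratr (Atil p A)) (map_mx ratr (btil n p b))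
              (fun t => map_mx ratr (D t)) (fun t => map_mx ratr (d0 t))
              xbar abar bbar ubar vbar)
    (hsep : (abar *m xbar) 0 0 < bbar)
    (thc : R) (dc : 'I_(m + (n + p)) -> R)
    (uc : T -> 'rV[R]_(m + (n + p))) (vc : T -> 'rV[R]_r)
    (hrcv : rcv_optimal (map_mx ratr (Atil p A)) (map_mx ratr (btil n p b))
              (fun t => map_mx ratr (D t)) (fun t => map_mx ratr (d0 t))
              abar bbar thc dc uc vc) :
  ~ strictly_irregular (map_mx ratr (Atil p A)) (map_mx ratr (btil n p b))
      (fun t => map_mx ratr (D t)) (fun t => map_mx ratr (d0 t)) abar bbar
  <-> 0 < thc.
Proof.
have [t0 _|hT] := pickP (@predT T).
  split.
  - by move=> hNS; exact: (dirB hrcv hNS).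
  - move=> thpos; apply: (dirA t0 hrcv.1 thpos).
    rewrite -negb_and; apply/negP => /andP [/eqP ha /eqP hb].
    by move: hsep; rewrite ha hb mul0mx mxE ltxx.
exfalso; case: hopt => [[[_ _ hs _ _] _] _].
rewrite !big_pred0 // in hs.
by move/eqP: hs; rewrite addr0 eq_sym oner_eq0.
Qed.
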